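(* Let $s\ge 2$ and $R\ge 1$ be integers. The following are equivalent: (i) $\mathrm{Perf}(s,R,R)\neq\emptyset$; (ii) $\mathrm{Perf}(s,r,R)\neq\emptyset$ for some integer $r>R$; (iii) $\mathrm{Perf}(s,r,R)\neq\emptyset$ for every integer $r>R$.
   Context: $q$ is a prime power, $\mathbb F_q^{s\times n}$ the set of $s\times n$ matrices over $\mathbb F_q$ with rows in $\mathbb F_q^{1\times n}$. For a row $y=(y_1,\dots,y_n)$, the NRT weight is $w(y)=\max\{j: y_j\neq 0\}$ if $y\ne0$ and $w(0)=0$; for a matrix, $w(x)=\sum_i w(x_i)$. The NRT metric is $d(x,y)=w(x-y)$; $B(c,R)=\{x: d(x,c)\le R\}$. A code $C\subseteq\mathbb F_q^{s\times n}$ is $R$-perfect if the balls $B(c,R)$, $c\in C$, are pairwise disjoint and cover $\mathbb F_q^{s\times n}$; non-trivial means $|C|>1$ and $C\ne\mathbb F_q^{s\times n}$. $\mathrm{Perf}(s,n,R)$ denotes the set of non-trivial $R$-perfect codes in $\mathbb F_q^{s\times n}$ (for the fixed $q$). *)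

(* Defs.v *)
From HB Require Import structures.
From mathcomp Require Import all_boot all_order all_algebra.
Set Implicit Arguments. Unset Strict Implicit. Unset Printing Implicit Defensive.
Import GRing.Theory.
Local Open Scope ring_scope.

(* The alphabet is a finite field F = F_q (q = #|F| is then a prime power). *)
(* Coordinates j : 'I_n of a row are 0-indexed, so the paper's index j is j.+1. *)

Definition row_wt (F : finFieldType) (n : nat) (y : 'rV[F]_n) : nat :=
  (\max_(j < n | y ord0 j != 0%R) j.+1)%N.

Definition nrt_wt (F : finFieldType) (s n : nat) (x : 'M[F]_(s, n)) : nat :=
  (\sum_(i < s) row_wt (row i x))%N.

Definition nrt_dist (F : finFieldType) (s n : nat) (x y : 'M[F]_(s, n)) : nat :=
  nrt_wt (x - y).

Definition nrt_ball (F : finFieldType) (s n : nat) (c : 'M[F]_(s, n)) (R : nat)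
  : {set 'M[F]_(s, n)} := [set x | (nrt_dist x c <= R)%N].

Definition perfect_code (F : finFieldType) (s n R : nat) (C : {set 'M[F]_(s, n)}) :=
  (forall c c', c \in C -> c' \in C -> c != c' ->
     [disjoint nrt_ball c R & nrt_ball c' R]) /\
  (forall x : 'M[F]_(s, n), exists2 c, c \in C & x \in nrt_ball c R).

Definition nontrivial_code (F : finFieldType) (s n : nat) (C : {set 'M[F]_(s, n)}) :=
  (1 < #|C|)%N /\ C != [set: 'M[F]_(s, n)].

Definition Perf_nonempty (F : finFieldType) (s n R : nat) : Prop :=
  exists C : {set 'M[F]_(s, n)}, nontrivial_code C /\ perfect_code R C.

(* Main.v *)
Require Import Defs.
From mathcomp Require Import all_boot all_order all_algebra.
From mathcomp Require Import zify.
Set Implicit Arguments. Unset Strict Implicit. Unset Printing Implicit Defensive.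
Import GRing.Theory.


Lemma row_wt_leP (F : finFieldType) n (y : 'rV[F]_n) k :
  (row_wt y <= k)%N = [forall j : 'I_n, (y ord0 j != 0%R) ==> (j < k)%N].
Proof.
apply/bigmax_leqP/forallP => [H j|H j Hj]; first by apply/implyP; exact: H.
exact: (implyP (H j)).
Qed.

Lemma row_wt_eq (F : finFieldType) n m (a : 'rV[F]_n) (b : 'rV[F]_m) :
  (forall k, (row_wt a <= k)%N = (row_wt b <= k)%N) -> row_wt a = row_wt b.
Proof. by move=> H; apply/eqP; rewrite eqn_leq H leqnn -H leqnn. Qed.

Lemma nrt_wt_row (F : finFieldType) s n (x : 'M[F]_(s, n)) i : (row_wt (row i x) <= nrt_wt x)%N.
Proof. by rewrite /nrt_wt (bigD1 i) //= leq_addr. Qed.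

Lemma row_wt0 (F : finFieldType) n : row_wt (0 : 'rV[F]_n) = 0%N.
Proof.
apply/eqP; rewrite -leqn0 row_wt_leP; apply/forallP => j; by rewrite mxE eqxx.
Qed.

Lemma nrt_wt0 (F : finFieldType) s n : nrt_wt (0 : 'M[F]_(s, n)) = 0%N.
Proof.
rewrite /nrt_wt big1 // => i _.
have -> : row i (0 : 'M[F]_(s, n)) = 0%R by apply/matrixP => a b; rewrite !mxE.
exact: row_wt0.
Qed.

Definition head (F : finFieldType) s n m (le : (m <= n)%N) (x : 'M[F]_(s, n)) : 'M[F]_(s, m) :=
  \matrix_(i, j) x i (widen_ord le j).

Definition ext (F : finFieldType) s n m (h : 'M[F]_(s, m)) (t : 'M[F]_(s, n)) : 'M[F]_(s, n) :=
  \matrix_(i, j) (match insub (nat_of_ord j) : option 'I_m with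
                   Some k => h i k | None => t i j end).

Lemma head_ext (F : finFieldType) s n m (le : (m <= n)%N) h t : head le (@ext F s n m h t) = h.
Proof.
apply/matrixP => i j; rewrite !mxE.
case: insubP => [k _ Ek|]; last by rewrite /= ltn_ord.
by congr (h i _); apply: val_inj.
Qed.

Lemma ext_tail (F : finFieldType) s n m h t i (j : 'I_n) : (m <= j)%N -> (@ext F s n m h t) i j = t i j.
Proof. by move=> Hj; rewrite mxE; case: insubP => [k Hk _|//]; rewrite ltnNge Hj in Hk. Qed.

Lemma headB (F : finFieldType) s n m (le : (m <= n)%N) (x y : 'M[F]_(s, n)) :
  head le (x - y)%R = (head le x - head le y)%R.
Proof. by apply/matrixP => i j; rewrite !mxE. Qed.

Lemma head_inj (F : finFieldType) s n m (le : (m <= n)%N) (x y : 'M[F]_(s, n)) :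
  head le x = head le y -> (forall i (j : 'I_n), (m <= j)%N -> x i j = y i j) -> x = y.
Proof.
move=> Hh Ht; apply/matrixP => i j; case: (ltnP j m) => Hj; last exact: Ht.
have := congr1 (fun M : 'M[F]_(s, m) => M i (Ordinal Hj)) Hh; rewrite !mxE.
  have -> : widen_ord le (Ordinal Hj) = j by apply: val_inj.
  done.
Qed.

Lemma wt_tail0 (F : finFieldType) s n m (le : (m <= n)%N) (y : 'M[F]_(s, n)) :
  (forall i (j : 'I_n), (m <= j)%N -> y i j = 0%R) -> nrt_wt y = nrt_wt (head le y).
Proof.
move=> H; apply: eq_bigr => i _; apply: row_wt_eq => k.
rewrite !row_wt_leP; apply/forallP/forallP => [Hf j|Hf j].
  by have := Hf (widen_ord le j); rewrite !mxE.
case: (ltnP j m) => Hj.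
  have := Hf (Ordinal Hj); rewrite !mxE.
  by have -> : widen_ord le (Ordinal Hj) = j by apply: val_inj.
by rewrite mxE H // eqxx.
Qed.

Lemma wt_le_tail (F : finFieldType) s n (y : 'M[F]_(s, n)) m :
  (nrt_wt y <= m)%N -> forall i (j : 'I_n), (m <= j)%N -> y i j = 0%R.
Proof.
move=> H i j Hj; have := leq_trans (nrt_wt_row y i) H.
rewrite row_wt_leP => /forallP /(_ j); rewrite mxE ltnNge Hj implybF.
by move/negPn/eqP.
Qed.

Lemma dist_split (F : finFieldType) s n m (le : (m <= n)%N) (x c : 'M[F]_(s, n)) :
  (nrt_dist x c <= m)%N <->
  ((forall i (j : 'I_n), (m <= j)%N -> x i j = c i j) /\
   (nrt_dist (head le x) (head le c) <= m)%N).
Proof.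
rewrite /nrt_dist -headB; split.
  move=> H; have Ht := wt_le_tail H.
  split; last by rewrite -wt_tail0.
  by move=> i j Hj; apply/eqP; rewrite -subr_eq0; have := Ht i j Hj; rewrite !mxE => ->.
case=> Ht H; rewrite (wt_tail0 le) // => i j Hj; by rewrite !mxE Ht // subrr.
Qed.


Lemma disjP (T : finType) (A B : {set T}) :
  (forall x, x \in A -> x \in B -> False) -> [disjoint A & B].
Proof.
move=> H; rewrite disjoint_subset; apply/subsetP => x Hx; rewrite inE /=.
by apply/negP => Hx'; exact: H Hx Hx'.
Qed.

Lemma perfect_eq (F : finFieldType) s n R (C : {set 'M[F]_(s, n)}) c c' :
  perfect_code R C -> c \in C -> c' \in C -> (nrt_dist c' c <= R)%N -> c' = c.
Proof.
case=> disj _ Hc Hc' Hd; apply/eqP; apply/negPn/negP => neq.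
have := disjointFr (disj _ _ Hc' Hc neq) (x := c').
rewrite !inE Hd /nrt_dist subrr nrt_wt0 => /(_ isT) //.
Qed.

Lemma up (F : finFieldType) s R r (le : (R <= r)%N) :
  Perf_nonempty F s R R -> Perf_nonempty F s r R.
Proof.
case=> C0 [[gt1 nfull] [disj cov]].
exists [set x | head le x \in C0]; split.
  split.
    case/card_gt1P: gt1 => h1 [h2 [H1 H2 neq]].
    apply/card_gt1P; exists (ext h1 0%R), (ext h2 0%R); rewrite !inE !head_ext H1 H2.
    split => //; apply/negP => /eqP E; move: neq; by rewrite -(head_ext le h1 0%R) E head_ext eqxx.
  apply/negP => /eqP E; move/negP: nfull; apply; apply/eqP/setP => h; rewrite inE.
  have : ext h 0%R \in [set x | head le x \in C0] by rewrite E inE.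
  by rewrite inE head_ext.
split.
  move=> c c' Hc Hc' neq; apply: disjP => x; rewrite !inE in Hc Hc' *.
  move=> /(dist_split le) [Ht H] /(dist_split le) [Ht' H'].
  have [Eh|neqh] := eqVneq (head le c) (head le c').
    move/negP: neq; apply; apply/eqP; apply: (head_inj Eh) => i j Hj.
    by rewrite -Ht // Ht'.
  have := disjointFr (disj _ _ Hc Hc' neqh) (x := head le x).
  by rewrite !inE H H' => /(_ isT).
move=> x; have [h Hh Hb] := cov (head le x).
exists (ext h x); first by rewrite inE head_ext.
rewrite inE; apply/(dist_split le); split.
  by move=> i j Hj; rewrite ext_tail.
by rewrite head_ext; rewrite inE in Hb.
Qed.


Lemma wt_big (F : finFieldType) s R (Hs : (2 <= s)%N) (HR : (1 <= R)%N) :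
  ~ (nrt_wt (\matrix_(i, j) 1%R : 'M[F]_(s, R)) <= R)%N.
Proof.
move=> H.
have Hrow : forall i, (R <= row_wt (row i (\matrix_(i, j) 1%R : 'M[F]_(s, R))))%N.
  move=> i; rewrite leqNgt; apply/negP => Hlt.
  have : (row_wt (row i (\matrix_(i, j) 1%R : 'M[F]_(s, R))) <= R.-1)%N.
    by rewrite -ltnS prednK.
  rewrite row_wt_leP => /forallP.
  have jl : (R.-1 < R)%N by rewrite ltn_predL.
  by move=> /(_ (Ordinal jl)); rewrite !mxE oner_eq0 /= ltnn.
have : (\sum_(i < s) R <= R)%N.
  apply: leq_trans H; exact: leq_sum.
rewrite sum_nat_const card_ord.
move=> H2; have := leq_mul Hs (leqnn R); move: H2 HR; lia.
Qed.

Lemma wt_small (F : finFieldType) s R (i0 : 'I_s) (j0 : 'I_R) (Hj0 : nat_of_ord j0 = 0%N) :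
  (nrt_wt (\matrix_(i, j) (if (i == i0) && (j == j0) then 1%R else 0%R)
     : 'M[F]_(s, R)) <= 1)%N.
Proof.
rewrite /nrt_wt (bigD1 i0) //= big1 ?addn0.
  rewrite row_wt_leP; apply/forallP => j; rewrite !mxE.
  rewrite eqxx /=; case: ifP => [/eqP ->|_]; first by rewrite Hj0 implybT.
  by rewrite eqxx.
move=> i /negbTE Hi; apply/eqP; rewrite -leqn0 row_wt_leP; apply/forallP => j.
by rewrite !mxE Hi eqxx.
Qed.

Lemma down (F : finFieldType) s R r (le : (R <= r)%N) (Hs : (2 <= s)%N) (HR : (1 <= R)%N) :
  Perf_nonempty F s r R -> Perf_nonempty F s R R.
Proof.
case=> C [[gt1 nfull] [disj cov]].
have [c0 Hc0] : exists c0, c0 \in C.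
  by case/card_gt1P: gt1 => a [b [Ha _ _]]; exists a.
pose tb (c : 'M[F]_(s, r)) :=
  [forall i, [forall j : 'I_r, (R <= j)%N ==> (c i j == c0 i j)]].
have tbP : forall c : 'M[F]_(s, r), reflect (forall i (j : 'I_r), (R <= j)%N -> c i j = c0 i j) (tb c).
  move=> c; apply: (iffP forallP) => H.
    by move=> i j Hj; move: (H i) => /forallP /(_ j) /implyP /(_ Hj) /eqP.
  by move=> i; apply/forallP => j; apply/implyP => Hj; apply/eqP; exact: H.
pose Ct := [set head le c | c in [pred c | (c \in C) && tb c]].
have Pf : perfect_code R Ct.
  split.
    move=> h h' /imsetP [c]; rewrite inE => /andP [Hc Tc] ->.
    move=> /imsetP [c']; rewrite inE => /andP [Hc' Tc'] -> neq.
    apply: disjP => y; rewrite !inE => Hy Hy'.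
    have Hx : forall d, d \in C -> tb d -> (nrt_dist y (head le d) <= R)%N ->
        ext y c0 \in nrt_ball d R.
      move=> d _ /tbP Td Hd; rewrite inE; apply/(dist_split le); split.
        by move=> i j Hj; rewrite ext_tail // Td.
      by rewrite head_ext.
    have neq' : c != c' by apply/eqP => E; rewrite E eqxx in neq.
    have := disjointFr (disj _ _ Hc Hc' neq') (Hx _ Hc Tc Hy).
    by rewrite (Hx _ Hc' Tc' Hy').
  move=> y; have [c Hc Hb] := cov (ext y c0).
  move: Hb; rewrite inE => /(dist_split le) [Ht Hd].
  exists (head le c).
    apply/imsetP; exists c => //; rewrite inE Hc /=; apply/tbP => i j Hj.
    by rewrite -Ht // ext_tail.
  by rewrite inE -(head_ext le y c0).
have Ph0 : head le c0 \in Ct.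
  by apply/imsetP; exists c0 => //; rewrite inE Hc0 /=; apply/tbP.
exists Ct; split => //; split.
  have [h Hh Hb] := Pf.2 (head le c0 + \matrix_(i, j) 1%R)%R.
  apply/card_gt1P; exists (head le c0), h; split => //.
  apply/eqP => E; rewrite -E inE /nrt_dist addrAC subrr add0r in Hb.
  exact: (wt_big Hs HR Hb).
have i0 : 'I_s by apply: (Ordinal (n := s) (m := 0)); apply: leq_trans Hs.
pose j0 : 'I_R := Ordinal HR.
pose E := ((\matrix_(i, j) (if (i == i0) && (j == j0) then 1 else 0))%R : 'M[F]_(s, R)).
apply/negP => /eqP Ef.
have Hy : (head le c0 + E)%R \in Ct by rewrite Ef inE.
have := perfect_eq Pf Ph0 Hy.
rewrite /nrt_dist addrAC subrr add0r => /(_ (leq_trans (@wt_small F s R i0 j0 erefl) HR)).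
move=> H; have : E = 0%R by apply: (addrI (head le c0)); rewrite addr0.
move/matrixP => /(_ i0 j0); rewrite !mxE !eqxx /=.
by move/eqP; rewrite oner_eq0.
Qed.


Theorem mainTheorem12 (F : finFieldType) (s R : nat) :
  (2 <= s)%N -> (1 <= R)%N ->
  (Perf_nonempty F s R R <-> exists r, (R < r)%N /\ Perf_nonempty F s r R) /\
  ((exists r, (R < r)%N /\ Perf_nonempty F s r R) <->
     forall r, (R < r)%N -> Perf_nonempty F s r R).
Proof.
move=> Hs HR; split; split.
- move=> P; exists R.+1; split => //; exact: (up (leqnSn R)).
- by case=> r [Hr P]; exact: (down (ltnW Hr) Hs HR P).
- by case=> r [Hr P] r' Hr'; apply: (up (ltnW Hr')); exact: (down (ltnW Hr) Hs HR P).
- by move=> H; exists R.+1; split => //; exact: H.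
Qed.
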